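(* Let $d\ge2$ and $-\frac{1}{d^2-1} \le t \le \frac{1}{d+1}$. Suppose $\{|x_i\rangle\}_{i=1}^{d^2}$ and $\{|y_i\rangle\}_{i=1}^{d^2}$ are tight, informationally complete frames of unit vectors in $\mathbb{C}^d$ such that for all $i\neq j$ $$|\langle x_i|y_j\rangle|^2 = \frac{1-t}{d}, \qquad |\langle x_i|y_i\rangle|^2 = \frac{t(d^2-1)+1}{d}.$$ Then $$\frac{1}{d^2}\sum_{i=1}^{d^2} |x_i\rangle\langle x_i| \otimes |y_i\rangle\langle y_i| = \frac{t}{d}U_{SW} + \frac{1-t}{d^2}I_{d^2}.$$
   Context: $U_{SW}$ is the swap operator on $\mathbb{C}^d\otimes\mathbb{C}^d$, $U_{SW}(|u\rangle\otimes|v\rangle)=|v\rangle\otimes|u\rangle$. A set of unit vectors $\{|x_i\rangle\}_{i=1}^n\subset\mathbb{C}^d$ is a tight frame if $\sum_i |x_i\rangle\langle x_i| = cI_d$ for some real $c\ge0$; it is informationally complete if the projectors $|x_i\rangle\langle x_i|$ span the space of all complex $d\times d$ matrices. *)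

(* Defs.v *)
(* Complex scalars: an arbitrary numClosedFieldType C
   (e.g. algC or the complex numbers complex R over a real closed field R). *)
From HB Require Import structures.
From mathcomp Require Import all_boot all_order all_algebra.
From mathcomp Require Export mxtens.
Set Implicit Arguments. Unset Strict Implicit. Unset Printing Implicit Defensive.
Import Order.TTheory GRing.Theory Num.Theory.
Local Open Scope ring_scope.

Section QDefs.
Variable C : numClosedFieldType.

Definition adjmx {m n} (A : 'M[C]_(m, n)) : 'M[C]_(n, m) := (map_mx Num.conj A)^T.

Definition inner {d} (x y : 'cV[C]_d) : C := (adjmx x *m y) 0 0.

Definition ketbra {d} (x : 'cV[C]_d) : 'M[C]_d := x *m adjmx x.

Definition unit_vec {d} (x : 'cV[C]_d) : Prop := inner x x = 1.

Definition tight_frame {d n} (x : 'I_n -> 'cV[C]_d) : Prop :=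
  exists c : C, c \is Num.real /\ 0 <= c /\ \sum_(i < n) ketbra (x i) = c%:M.

Definition info_complete {d n} (x : 'I_n -> 'cV[C]_d) : Prop :=
  forall M : 'M[C]_d, exists a : 'I_n -> C, M = \sum_(i < n) a i *: ketbra (x i).

(* swap operator on C^d (x) C^d, in the tensor basis of mxtens:
   U_SW |i,j> = |j,i> *)
Definition swap_mx d : 'M[C]_(d * d) :=
  \matrix_(a, b) (((mxtens_unindex a).1 == (mxtens_unindex b).2) &&
                  ((mxtens_unindex a).2 == (mxtens_unindex b).1))%:R.

Lemma swap_mxE d (u v : 'cV[C]_d) : swap_mx d *m (u *t v) = v *t u.
Proof.
apply/matrixP=> a k; case: (mxtens_indexP k) => k0 k1.
case: (mxtens_indexP a) => i j.
rewrite tensmxE mxE (bigD1 (mxtens_index (j, i))) //= big1 ?addr0.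
  rewrite tensmxE mxE !mxtens_indexK /= !eqxx mul1r [k0]ord1 [k1]ord1 mulrC.
  by [].
move=> b; case: (mxtens_indexP b) => k' l' ne.
rewrite !mxE !mxtens_indexK /=.
case: eqP => [ek|_]; last by rewrite mul0r.
case: eqP => [el|_]; last by rewrite mul0r.
by move: ne; rewrite ek el eqxx.
Qed.
End QDefs.

(* Main.v *)
Require Import Defs.
From HB Require Import structures.
From mathcomp Require Import all_boot all_order all_algebra.
From mathcomp Require Import mxtens ring.
Import Order.TTheory GRing.Theory Num.Theory.
Local Open Scope ring_scope.

Set Implicit Arguments. Unset Strict Implicit.
Section S.
Variable C : numClosedFieldType.

Lemma adjE m n (A : 'M[C]_(m, n)) i j : adjmx A i j = (A j i)^*.
Proof. by rewrite /adjmx !mxE. Qed.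

Lemma innerE d (x y : 'cV[C]_d) : inner x y = \sum_k (x k 0)^* * y k 0.
Proof. by rewrite /inner mxE; apply eq_bigr => k _; rewrite adjE. Qed.

Lemma ketbraE d (x : 'cV[C]_d) p q : ketbra x p q = x p 0 * (x q 0)^*.
Proof. by rewrite /ketbra mxE big_ord1 adjE. Qed.

Lemma inner_conj d (x y : 'cV[C]_d) : inner y x = (inner x y)^*.
Proof.
rewrite !innerE rmorph_sum; apply eq_bigr => k _.
by rewrite rmorphM /= conjCK mulrC.
Qed.

Definition tr2 d (Y M : 'M[C]_d) := \sum_p \sum_q Y p q * M q p.
Definition tr1 d (M : 'M[C]_d) := \sum_p M p p.

Lemma pair_ketbra d (x y : 'cV[C]_d) :
  tr2 (ketbra y) (ketbra x) = `|inner x y| ^+ 2.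
Proof.
rewrite normCK -inner_conj !innerE /tr2 big_distrl; apply eq_bigr => p _.
rewrite big_distrr; apply eq_bigr => q _; rewrite !ketbraE /=; ring.
Qed.

Lemma tr1_ketbra d (x : 'cV[C]_d) : tr1 (ketbra x) = inner x x.
Proof. by rewrite innerE; apply eq_bigr => p _; rewrite ketbraE mulrC. Qed.

Lemma tr2_delta d (Y : 'M[C]_d) b b' : tr2 Y (delta_mx b' b) = Y b b'.
Proof.
rewrite /tr2 (bigD1 b) //= [X in _ + X]big1 ?addr0.
  rewrite (bigD1 b') //= [X in _ + X]big1 ?addr0.
    by rewrite mxE !eqxx mulr1.
  by move=> q /negbTE nq; rewrite mxE nq mulr0.
move=> p /negbTE np; apply big1 => q _; by rewrite mxE np andbF mulr0.
Qed.

Lemma tr1_delta d (b b' : 'I_d) : tr1 (delta_mx b' b : 'M[C]_d) = (b' == b)%:R.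
Proof.
rewrite /tr1 (bigD1 b') //= [X in _ + X]big1 ?addr0.
  by rewrite mxE eqxx.
by move=> p /negbTE np; rewrite mxE np.
Qed.

Lemma tr2_tr d (Y M : 'M[C]_d) : tr2 Y M = \tr (Y *m M).
Proof. by rewrite /tr2 /mxtrace; apply eq_bigr => p _; rewrite mxE. Qed.

Lemma tr1_tr d (M : 'M[C]_d) : tr1 M = \tr M.
Proof. by []. Qed.

Lemma key d (x y : 'I_(d ^ 2) -> 'cV[C]_d) (t : C) :
  d%:R != 0 :> C ->
  (forall i, unit_vec (x i)) ->
  tight_frame x -> info_complete x ->
  (forall i j, i != j -> `|inner (x i) (y j)| ^+ 2 = (1 - t) / d%:R) ->
  (forall i, `|inner (x i) (y i)| ^+ 2 = (t * (d%:R ^+ 2 - 1) + 1) / d%:R) ->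
  forall M : 'M[C]_d,
  \sum_i tr2 (ketbra (y i)) M *: ketbra (x i)
    = ((1 - t) * tr1 M) *: 1%:M + (t * d%:R) *: M.
Proof.
move=> hd ux [c [_ [_ hc]]] ic h1 h2.
have sumX : \sum_i ketbra (x i) = d%:R%:M.
  rewrite hc; suff -> : c = d%:R by [].
  have := congr1 mxtrace hc; rewrite mxtrace_scalar linear_sum /=.
  under eq_bigr do rewrite -tr1_tr tr1_ketbra ux.
  rewrite sumr_const card_ord natrX => /eqP.
  rewrite -[c *+ d]mulr_natr expr2 => /eqP /esym; exact: (mulIf hd).
have hk : forall k, \sum_i tr2 (ketbra (y i)) (ketbra (x k)) *: ketbra (x i)
    = (1 - t) *: 1%:M + (t * d%:R) *: ketbra (x k).
  move=> k; under eq_bigr do rewrite pair_ketbra.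
  rewrite (bigD1 k) //= h2.
  have -> : \sum_(i | i != k) `|inner (x k) (y i)| ^+ 2 *: ketbra (x i)
      = ((1 - t) / d%:R) *: \sum_(i | i != k) ketbra (x i).
    by rewrite scaler_sumr; apply eq_bigr => i ik; rewrite h1 // eq_sym.
  have -> : \sum_(i | i != k) ketbra (x i) = d%:R%:M - ketbra (x k).
    by rewrite -sumX [X in _ = X - _](bigD1 k) //= addrC addrK.
  apply/matrixP => a b; rewrite !mxE.
  case: (a == b); rewrite ?mulr1n ?mulr0n; field; exact: hd.
move=> M; case: (ic M) => a ->.
have E : forall i, tr2 (ketbra (y i)) (\sum_k a k *: ketbra (x k))
    = \sum_k a k * tr2 (ketbra (y i)) (ketbra (x k)).
  move=> i; rewrite tr2_tr linear_sum linear_sum /=; apply eq_bigr => k _.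
  by rewrite linearZ linearZ /= tr2_tr.
under eq_bigr do rewrite E scaler_suml.
rewrite exchange_big /=.
under eq_bigr => k _.
  rewrite (_ : \sum_i _ = a k *: \sum_i tr2 (ketbra (y i)) (ketbra (x k)) *: ketbra (x i)); last first.
    by rewrite scaler_sumr; apply eq_bigr => i _; rewrite scalerA.
  rewrite hk scalerDr.
  over.
rewrite big_split /= tr1_tr linear_sum /=.
congr (_ + _).
  rewrite mulr_sumr scaler_suml; apply eq_bigr => k _.
  by rewrite mxtraceZ -tr1_tr tr1_ketbra ux mulr1 !scalerA mulrC.
by rewrite scaler_sumr; apply eq_bigr => k _; rewrite !scalerA mulrC.
Qed.
End S.
Unset Implicit Arguments.

Theorem theorem2 (C : numClosedFieldType) (d : nat) (t : C)
    (x y : 'I_(d ^ 2) -> 'cV[C]_d) :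
  (2 <= d)%N ->
  t \is Num.real ->
  - 1 / (d%:R ^+ 2 - 1) <= t -> t <= 1 / (d%:R + 1) ->
  (forall i, unit_vec (x i)) -> (forall i, unit_vec (y i)) ->
  tight_frame x -> tight_frame y ->
  info_complete x -> info_complete y ->
  (forall i j, i != j -> `|inner (x i) (y j)| ^+ 2 = (1 - t) / d%:R) ->
  (forall i, `|inner (x i) (y i)| ^+ 2 = (t * (d%:R ^+ 2 - 1) + 1) / d%:R) ->
  (d%:R ^+ 2)^-1 *: \sum_(i < d ^ 2) (ketbra (x i) *t ketbra (y i))
    = (t / d%:R) *: swap_mx C d + ((1 - t) / d%:R ^+ 2) *: 1%:M.
Proof.
move=> hd2 _ _ _ ux uy tfx tfy icx icy h1 h2.
have hd : d%:R != 0 :> C by rewrite pnatr_eq0 -lt0n (leq_trans _ hd2).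
have K := key (y:=y) hd ux tfx icx h1 h2.
apply/matrixP => A B.
case: (mxtens_indexP A) => a b; case: (mxtens_indexP B) => a' b'.
have := congr1 (fun M : 'M_d => M a a') (K (delta_mx b' b)).
rewrite /= summxE => Ks0.
have Ks : \sum_i ketbra (y i) b b' * ketbra (x i) a a'
   = (((1 - t) * tr1 (delta_mx b' b : 'M[C]_d)) *: 1%:M + (t * d%:R) *: delta_mx b' b) a a'.
  by rewrite -Ks0; apply: eq_bigr => i _; rewrite [RHS]mxE tr2_delta.
rewrite !mxE tr1_delta in Ks.
rewrite !mxE summxE.
rewrite (_ : \sum_i _ = \sum_i ketbra (y i) b b' * ketbra (x i) a a'); last first.
  by apply eq_bigr => i _; rewrite tensmxE mulrC.
rewrite Ks !mxtens_indexK /= (inj_eq (can_inj (@mxtens_indexK _ _))) xpair_eqE (eq_sym a' b).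
repeat match goal with |- context [(?u == ?v)] =>
  case: (eqVneq u v) => [hE|hne]; [subst; rewrite ?eqxx /= | rewrite ?(negbTE hne) ?(eq_sym v u) ?(negbTE hne) /=; clear hne]
end; rewrite ?mulr1n ?mulr0n ?mulr1 ?mulr0 ?addr0 ?add0r; field; exact: hd.
Qed.
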